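(* Let $n\ge 3$ and let $r=(r_1,\dots,r_n)$ be positive real numbers such that $2r_j\le \sum_{i=1}^n r_i$ for every $j$ and $r_1\pm r_2\pm\cdots\pm r_n\neq 0$ for every choice of signs. Let ${\cal U}_r=\{U=(u_1,\dots,u_n)\in (S^4)^n : \sum_{i=1}^n r_iu_i=0\}$, where $S^4\subset\mathbb{R}^5$ is the unit sphere, with $SO(5)$ acting diagonally. Then every degenerate $U\in{\cal U}_r$ is of type $2$ or of type $3$; that is, if the stabilizer of $U$ in $SO(5)$ is nontrivial, then it is a subgroup isomorphic to $SO(2)$ or to $SO(3)$.
   Context: An element $U\in{\cal U}_r$ (equivalently the closed polygon in $\mathbb{R}^5$ with edge vectors $r_iu_i$) is called degenerate if its stabilizer under the diagonal $SO(5)$-action is a nontrivial subgroup of $SO(5)$. A degenerate polygon is of type $k$ if its stabilizer is a subgroup $H_k\subseteq SO(5)$ isomorphic to $SO(k)$. *)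

(* Defs.v *)
From HB Require Import structures.
From mathcomp Require Import all_boot all_order all_algebra.
From mathcomp Require Import reals.
Set Implicit Arguments. Unset Strict Implicit. Unset Printing Implicit Defensive.
Import Order.TTheory GRing.Theory Num.Theory.
Local Open Scope ring_scope.

Definition SOmx (R : realType) (k : nat) : pred 'M[R]_k :=
  fun A => (A^T *m A == 1%:M) && (\det A == 1).

Definition S4 (R : realType) : pred 'cV[R]_5 :=
  fun u => \sum_(j < 5) u j 0 ^+ 2 == 1.

Definition in_Ur (R : realType) (n : nat) (r : 'I_n -> R)
  (U : 'I_n -> 'cV[R]_5) : Prop :=
  (forall i, U i \in @S4 R) /\ \sum_(i < n) r i *: U i = 0.

Definition stab (R : realType) (n : nat) (U : 'I_n -> 'cV[R]_5) : pred 'M[R]_5 :=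
  fun g => (g \in @SOmx R 5) && [forall i, g *m U i == U i].

Definition degenerate (R : realType) (n : nat) (U : 'I_n -> 'cV[R]_5) : Prop :=
  exists2 g, g \in stab U & g != 1%:M.

Definition iso_to_SO (R : realType) (k : nat) (H : pred 'M[R]_5) : Prop :=
  exists phi : 'M[R]_k -> 'M[R]_5,
    [/\ {in @SOmx R k, forall A, phi A \in H},
        {in @SOmx R k &, injective phi},
        {in H, forall g, exists2 A, A \in @SOmx R k & phi A = g} &
        {in @SOmx R k &, forall A B, phi (A *m B) = phi A *m phi B}].

Definition of_type (R : realType) (n : nat) (U : 'I_n -> 'cV[R]_5) (k : nat) : Prop :=
  iso_to_SO k (stab U).

(* Main.v *)
Require Import Defs.
From HB Require Import structures.
From mathcomp Require Import all_boot all_order all_algebra.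
From mathcomp Require Import reals.
From mathcomp Require Import zify.
Import Order.TTheory GRing.Theory Num.Theory.
Local Open Scope ring_scope.


Section GS.
Variable R : realType.
Variable N : nat.

Lemma dotE (v : 'rV[R]_N) : v *m v^T = (\sum_j v 0 j ^+ 2)%:M.
Proof.
apply/matrixP => i j; rewrite !ord1 !mxE; apply: eq_bigr => k _.
by rewrite !mxE expr2.
Qed.

Lemma dot0 (v : 'rV[R]_N) : \sum_j v 0 j ^+ 2 = 0 -> v = 0.
Proof.
move=> h; apply/matrixP => i j; rewrite ord1 mxE.
have := @psumr_eq0P _ _ _ _ (fun k _ => sqr_ge0 (v 0 k)) h j isT.
by move/eqP; rewrite sqrf_eq0 => /eqP.
Qed.

Lemma gs_step p (B0 : 'M[R]_(p, N)) (a : 'rV[R]_N) :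
  B0 *m B0^T = 1%:M ->
  exists q, exists C : 'M[R]_(q, N),
    [/\ C *m C^T = 1%:M, B0 *m C^T = 0 & (B0 + C == B0 + a)%MS].
Proof.
move=> hB.
set v := a - (a *m B0^T) *m B0.
have hBv : B0 *m v^T = 0.
  rewrite /v linearB /= !trmx_mul trmxK mulmxBr !mulmxA hB mul1mx.
  by rewrite subrr.
have av : (a <= B0 + v)%MS.
  have -> : a = v + (a *m B0^T) *m B0 by rewrite /v subrK.
  by rewrite addsmxC addmx_sub_adds // submxMl.
have va : (v <= B0 + a)%MS.
  by rewrite /v addsmxC addmx_sub_adds // eqmx_opp submxMl.
have sva : (B0 + v == B0 + a)%MS.
  apply/andP; split; rewrite addsmx_sub ?addsmxSl //= ?va ?av //.
have [v0|vn0] := eqVneq v 0.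
  exists 0%N, 0; split.
  - by apply/matrixP => i [].
  - by apply/matrixP => i [].
  have aB : (a <= B0)%MS by move: av; rewrite v0 addsmx0.
  apply/andP; split; rewrite addsmx_sub ?addsmxSl //=.
    by rewrite sub0mx.
  by rewrite (submx_trans aB) ?addsmxSl.
set s := \sum_j v 0 j ^+ 2.
have s0 : 0 < s.
  rewrite lt_def sumr_ge0 ?andbT; last by move=> j _; exact: sqr_ge0.
  by apply/eqP => /dot0; apply/eqP.
set nv := Num.sqrt s.
have nv0 : 0 < nv by rewrite sqrtr_gt0.
exists 1%N, (nv^-1 *: v); split.
- rewrite linearZ /= -scalemxAl -scalemxAr dotE scalerA -expr2 -/s.
  rewrite -[s in s%:M](sqr_sqrtr (ltW s0)) -/nv scale_scalar_mx -exprMn.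
  by rewrite mulVf ?expr1n // gt_eqF.
- by rewrite linearZ /= -scalemxAr hBv scaler0.
have hnz : nv^-1 != 0 by rewrite invr_eq0 gt_eqF.
have e := adds_eqmx (eqmx_refl B0) (eqmx_scale v hnz).
by apply/eqmxP; apply: eqmx_trans e _; exact/eqmxP.
Qed.

Lemma gs m : forall p (B0 : 'M[R]_(p, N)) (A : 'M[R]_(m, N)),
  B0 *m B0^T = 1%:M ->
  exists q, exists C : 'M[R]_(q, N),
    [/\ C *m C^T = 1%:M, B0 *m C^T = 0 & (B0 + C == B0 + A)%MS].
Proof.
elim: m => [|m IH] p B0 A hB.
  exists 0%N, A; split => //.
  - by apply/matrixP => i [].
  - by apply/matrixP => i [].
  by apply/eqmxP; exact: eqmx_refl.
have -> : A = col_mx (usubmx (A : 'M_(1 + m, N))) (dsubmx (A : 'M_(1 + m, N))).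
  by rewrite vsubmxK.
set a := usubmx _; set A' := dsubmx _.
have [q1 [C1 [h11 h01 s1]]] := @gs_step _ B0 a hB.
have hB1 : col_mx B0 C1 *m (col_mx B0 C1)^T = 1%:M.
  have h10 : C1 *m B0^T = 0 by rewrite -[C1 *m _]trmxK trmx_mul trmxK h01 trmx0.
  rewrite tr_col_mx mul_col_row hB h11 h01 h10.
  by rewrite -scalar_mx_block.
have [q2 [C2 [h22 h12 s2]]] := IH _ _ A' hB1.
move: h12; rewrite mul_col_mx => /eqP; rewrite col_mx_eq0 => /andP[/eqP h02 /eqP h12].
exists (q1 + q2)%N, (col_mx C1 C2); split.
- have h21 : C2 *m C1^T = 0 by rewrite -[C2 *m _]trmxK trmx_mul trmxK h12 trmx0.
  rewrite tr_col_mx mul_col_row h11 h22 h12 h21.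
  by rewrite -scalar_mx_block.
- by rewrite tr_col_mx mul_mx_row h01 h02 row_mx0.
move/andP: s1 => [s1a s1b]; move/andP: s2 => [s2a s2b].
have cu : forall m1 m2 (X : 'M[R]_(m1, N)) (Y : 'M[R]_(m2, N)), (X <= col_mx X Y)%MS.
  by move=> m1 m2 X Y; have := addsmxSl X Y; rewrite addsmxE.
have cd : forall m1 m2 (X : 'M[R]_(m1, N)) (Y : 'M[R]_(m2, N)), (Y <= col_mx X Y)%MS.
  by move=> m1 m2 X Y; have := addsmxSr X Y; rewrite addsmxE.
set T := (B0 + col_mx a A')%MS; set L := (B0 + col_mx C1 C2)%MS.
apply/andP; split.
  have hB0T : (B0 <= T)%MS by apply: addsmxSl.
  have haT : (a <= T)%MS by apply: submx_trans (cu _ _ a A') (addsmxSr _ _).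
  have hA'T : (A' <= T)%MS by apply: submx_trans (cd _ _ a A') (addsmxSr _ _).
  have hB0aT : (B0 + a <= T)%MS by rewrite addsmx_sub hB0T haT.
  have hC1T : (C1 <= T)%MS.
    exact: submx_trans (addsmxSr B0 C1) (submx_trans s1a hB0aT).
  have hcolT : (col_mx B0 C1 <= T)%MS by rewrite col_mx_sub hB0T hC1T.
  have hC2T : (C2 <= T)%MS.
    apply: submx_trans (addsmxSr (col_mx B0 C1) C2) (submx_trans s2a _).
    by rewrite addsmx_sub hcolT hA'T.
  by rewrite addsmx_sub hB0T col_mx_sub hC1T hC2T.
have hB0L : (B0 <= L)%MS by apply: addsmxSl.
have hC1L : (C1 <= L)%MS by apply: submx_trans (cu _ _ C1 C2) (addsmxSr _ _).
have hC2L : (C2 <= L)%MS by apply: submx_trans (cd _ _ C1 C2) (addsmxSr _ _).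
have hB0C1L : (B0 + C1 <= L)%MS by rewrite addsmx_sub hB0L hC1L.
have haL : (a <= L)%MS.
  exact: submx_trans (addsmxSr B0 a) (submx_trans s1b hB0C1L).
have hcolL : (col_mx B0 C1 <= L)%MS by rewrite col_mx_sub hB0L hC1L.
have hA'L : (A' <= L)%MS.
  apply: submx_trans (addsmxSr (col_mx B0 C1) A') (submx_trans s2b _).
  by rewrite addsmx_sub hcolL hC2L.
by rewrite addsmx_sub hB0L col_mx_sub haL hA'L.
Qed.
End GS.


Lemma det_conj (R : realType) p (Q : 'M[R]_(p, 5)) (D : 'M[R]_p) :
  p = 5%N -> Q *m Q^T = 1%:M -> \det (Q^T *m D *m Q) = \det D.
Proof.
move=> e; subst p => hQ.
by rewrite !det_mulmx mulrAC [\det Q^T * _]mulrC -det_mulmx hQ det1 mul1r.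
Qed.

Lemma orth_sq (R : realType) p (Q : 'M[R]_(p, 5)) :
  p = 5%N -> Q *m Q^T = 1%:M -> Q^T *m Q = 1%:M.
Proof. by move=> e; subst p => hQ; apply: mulmx1C. Qed.

Section Iso.
Variables (R : realType) (n d k : nat) (U : 'I_n -> 'cV[R]_5).
Variables (B : 'M[R]_(d, 5)) (C : 'M[R]_(k, 5)).
Hypothesis hB : B *m B^T = 1%:M.
Hypothesis hC : C *m C^T = 1%:M.
Hypothesis hBC : B *m C^T = 0.
Hypothesis hQ : B^T *m B + C^T *m C = 1%:M.
Hypothesis hdk : (d + k = 5)%N.
Hypothesis hCU : forall i, C *m U i = 0.
Hypothesis hBU : forall g, (forall i, g *m U i = U i) -> g *m B^T = B^T.

Let hCB : C *m B^T = 0.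
Proof. by rewrite -[C *m _]trmxK trmx_mul trmxK hBC trmx0. Qed.

Definition phi (A : 'M[R]_k) : 'M[R]_5 := B^T *m B + C^T *m A *m C.
Let Q := col_mx B C.
Let D (A : 'M[R]_k) : 'M[R]_(d + k) := block_mx 1%:M 0 0 A.

Let QQt : Q *m Q^T = 1%:M.
Proof.
by rewrite /Q tr_col_mx mul_col_row hB hC hBC hCB -scalar_mx_block.
Qed.

Let phiE A : phi A = Q^T *m D A *m Q.
Proof.
rewrite /phi /Q /D tr_col_mx mul_row_block mul_row_col.
by rewrite !mulmx0 !mulmx1 addr0 add0r.
Qed.

Lemma phiM A A' : phi A *m phi A' = phi (A *m A').
Proof.
rewrite !phiE -!mulmxA (mulmxA Q) QQt mul1mx (mulmxA (D A)) /D mulmx_block.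
by rewrite !mulmx0 !mul0mx !mulmx1 !addr0 !add0r.
Qed.

Lemma phiT A : (phi A)^T = phi A^T.
Proof.
by rewrite /phi linearD /= !trmx_mul !trmxK mulmxA.
Qed.

Lemma phi1 : phi 1%:M = 1%:M.
Proof. by rewrite /phi mulmx1. Qed.

Lemma phi_inj A : C *m phi A *m C^T = A.
Proof.
rewrite /phi mulmxDr mulmxDl !mulmxA hCB !mul0mx add0r hC mul1mx.
by rewrite -mulmxA hC mulmx1.
Qed.

Lemma det_phi A : \det (phi A) = \det A.
Proof.
rewrite phiE (@det_conj R _ Q (D A) hdk QQt).
by rewrite /D det_ublock det1 mul1r.
Qed.

Lemma phi_stab A : A \in @SOmx R k -> phi A \in stab U.
Proof.
rewrite /SOmx /stab !unfold_in => /andP[/eqP hA /eqP dA].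
apply/andP; split.
  by rewrite phiT phiM hA phi1 det_phi dA !eqxx.
apply/forallP => i; apply/eqP.
rewrite /phi mulmxDl -(mulmxA _ C (U i)) (hCU i) mulmx0 addr0.
by rewrite -{2}(mul1mx (U i)) -hQ mulmxDl -(mulmxA C^T C (U i)) (hCU i) mulmx0 addr0.
Qed.

Lemma stab_inv g : g \in stab U ->
  C *m g *m C^T \in @SOmx R k /\ phi (C *m g *m C^T) = g.
Proof.
rewrite /stab /SOmx !unfold_in => /andP[/andP[/eqP hg /eqP dg] /forallP hU].
have hgU : forall i, g *m U i = U i by move=> i; apply/eqP; exact: hU.
have hgB := hBU g hgU.
have hBg : B *m g = B.
  by rewrite -[B *m g]trmxK trmx_mul -{1}hgB mulmxA hg mul1mx trmxK.
have hgC : g *m C^T = C^T *m (C *m g *m C^T).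
  rewrite -{1}(mul1mx g) -hQ !mulmxDl -(mulmxA B^T B g) hBg -(mulmxA B^T B) hBC mulmx0 add0r.
  by rewrite !mulmxA.
have e : phi (C *m g *m C^T) = g.
  rewrite /phi -hgC.
  by rewrite -{2}(mulmx1 g) -hQ mulmxDr mulmxA hgB mulmxA.
split => //.
have ho : phi ((C *m g *m C^T)^T *m (C *m g *m C^T)) = phi 1%:M.
  by rewrite -phiM -phiT e hg phi1.
have hA := f_equal (fun M => C *m M *m C^T) ho; rewrite /= !phi_inj in hA. rewrite hA eqxx /=.
by rewrite -det_phi e dg.
Qed.

Lemma iso_phi : iso_to_SO k (stab U).
Proof.
exists phi; split.
- exact: phi_stab.
- by move=> A A' _ _ e; rewrite -(phi_inj A) e phi_inj.
- by move=> g /stab_inv [h1 h2]; exists (C *m g *m C^T).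
- by move=> A A' _ _; rewrite phiM.
Qed.

End Iso.


Lemma QQt_gen (R : realType) d k (B : 'M[R]_(d, 5)) (C : 'M[R]_(k, 5)) :
  B *m B^T = 1%:M -> C *m C^T = 1%:M -> B *m C^T = 0 ->
  col_mx B C *m (col_mx B C)^T = 1%:M.
Proof.
move=> hB hC hBC.
have hCB : C *m B^T = 0 by rewrite -[C *m _]trmxK trmx_mul trmxK hBC trmx0.
by rewrite tr_col_mx mul_col_row hB hC hBC hCB -scalar_mx_block.
Qed.

Theorem lemma2p3 (R : realType) (n : nat) (r : 'I_n -> R) :
  (3 <= n)%N ->
  (forall i, 0 < r i) ->
  (forall j, 2 * r j <= \sum_(i < n) r i) ->
  (forall s : 'I_n -> bool, \sum_(i < n) (if s i then r i else - r i) != 0) ->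
  forall U : 'I_n -> 'cV[R]_5,
    in_Ur r U -> degenerate U -> of_type U 2 \/ of_type U 3.
Proof.
move=> hn _ _ hsign U [hS hsum] [g hg hg1].
pose Wt : 'M[R]_(5, n) := \matrix_(j, i) U i j 0.
have colW : forall i, col i Wt = U i.
  by move=> i; apply/matrixP => j l; rewrite ord1 !mxE.
have hU1 : forall i, (U i)^T *m U i = 1%:M.
  move=> i; move: (hS i); rewrite unfold_in /S4 => /eqP h.
  apply/matrixP => a b; rewrite !ord1 !mxE -h; apply: eq_bigr => j _.
  by rewrite !mxE expr2.
have hB00 : (0 : 'M[R]_(0, 5)) *m (0 : 'M[R]_(0, 5))^T = 1%:M.
  by apply/matrixP => i [].
have [d [B [hB _ sB]]] := @gs R 5 n 0 0 Wt^T hB00.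
have hB0 : (0 : 'M[R]_(0, 5)) *m B^T = 0 by rewrite mul0mx.
have [k [C [hC hBC sC]]] := @gs R 5 5 d B 1%:M hB.
have hQQ := @QQt_gen R d k B C hB hC hBC.
have hdk : (d + k = 5)%N.
  have r1 : \rank (col_mx B C) = (d + k)%N.
    apply/eqP; rewrite eqn_leq rank_leq_row /=.
    by have := mxrankM_maxl (col_mx B C) (col_mx B C)^T; rewrite hQQ mxrank1.
  have r2 : \rank (B + C)%MS = 5%N.
    rewrite (eqmx_rank sC); apply/eqP; rewrite eqn_leq rank_leq_col /=.
    by move: (mxrankS (addsmxSr B (1%:M : 'M[R]_5))); rewrite mxrank1.
  have r3 : \rank (B + C)%MS = \rank (col_mx B C) by rewrite addsmxE.
  exact: (etrans (esym r1) (etrans (esym r3) r2)).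
have hQ : B^T *m B + C^T *m C = 1%:M.
  by have := @orth_sq R _ (col_mx B C) hdk hQQ; rewrite tr_col_mx mul_row_col.
move/andP: sB => [sB1 sB2].
have BW : (B <= Wt^T)%MS by move: sB1; rewrite !adds0mx.
have WB : (Wt^T <= B)%MS by move: sB2; rewrite !adds0mx.
have hCB : C *m B^T = 0 by rewrite -[C *m _]trmxK trmx_mul trmxK hBC trmx0.
have hUB : forall i, U i = B^T *m ((row i Wt^T *m pinvmx B)^T).
  move=> i; rewrite -colW -[col i Wt]trmxK tr_col.
  by rewrite -trmx_mul mulmxKpV // (submx_trans (row_sub _ _) WB).
have hCU : forall i, C *m U i = 0.
  by move=> i; rewrite hUB mulmxA hCB mul0mx.
have hBU : forall g : 'M[R]_5, (forall i, g *m U i = U i) -> g *m B^T = B^T.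
  move=> h hh.
  have hW : h *m Wt = Wt.
    have e : forall i, col i (h *m Wt) = col i Wt.
      by move=> i; rewrite colE -mulmxA -colE colW (hh i).
    apply/matrixP => j i; move: (congr1 (fun M : 'cV[R]_5 => M j 0) (e i)).
    by rewrite !mxE.
  rewrite -(mulmxKpV BW) trmx_mul trmxK mulmxA hW //.
have hUU : forall i, U i = B^T *m (B *m U i).
  move=> i; rewrite mulmxA -[B^T *m B](addrK (C^T *m C)) hQ mulmxBl mul1mx.
  by rewrite -mulmxA (hCU i) mulmx0 subr0.
have [hso hphi] := @stab_inv R n d k U B C hB hC hBC hQ hdk hBU g hg.
have ph1 := @phi1 R d k B C hQ.
have hk2 : (2 <= k)%N.
  case: k C hC hBC sC hQQ hdk hQ hCB hCU hBU hso hphi ph1 => [|[|k]] C hC hBC sC hQQ hdk hQ hCB hCU hBU hso hphi ph1 //.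
    have e : C *m g *m C^T = 1%:M by apply/matrixP => i [].
    by move: hg1; rewrite -hphi e ph1 eqxx.
  have e : C *m g *m C^T = 1%:M.
    move: hso; rewrite unfold_in /SOmx => /andP[_ /eqP].
    by rewrite det_mx11 => h1; apply/matrixP => i j; rewrite !ord1 h1 !mxE eqxx.
  by move: hg1; rewrite -hphi e ph1 eqxx.
have i0 : 'I_n by exists 0%N; lia.
have [d0|[d1|d2]] : d = 0%N \/ d = 1%N \/ (2 <= d)%N by lia.
- subst d; exfalso.
  have h0 : U i0 = 0.
    by rewrite hUU; apply/matrixP => a b; rewrite !mxE big_ord0.
  move: (hU1 i0); rewrite h0 mulmx0 => /matrixP/(_ 0 0); rewrite !mxE /=.
  by move/eqP; rewrite eq_sym oner_eq0.
- subst d; exfalso.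
  pose c i := (B *m U i) 0 0.
  have hc2 : forall i, c i ^+ 2 = 1.
    move=> i; move: (hU1 i); rewrite {1 2}(hUU i) trmx_mul trmxK mulmxA.
    rewrite -(mulmxA _ B) hB mulmx1 => /matrixP/(_ 0 0).
    by rewrite !mxE big_ord1 !mxE /= -expr2 /c mxE.
  have hs0 : \sum_i r i * c i = 0.
    have h := congr1 (fun M : 'cV[R]_5 => (B *m M) 0 0) hsum.
    rewrite /= mulmx_sumr mulmx0 summxE in h.
    have z : (0 : 'cV[R]_1) 0 0 = 0 by rewrite mxE.
    rewrite z in h; apply: etrans h.
    by apply: eq_bigr => i _; rewrite -scalemxAr mxE.
  have E : \sum_(i < n) (if 0 < c i then r i else - r i) = \sum_i r i * c i.
    apply: eq_bigr => i _.
    have := hc2 i; move/eqP; rewrite sqrf_eq1 => /orP[] /eqP ->.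
      by rewrite ltr01 mulr1.
    by rewrite ltr0N1 mulrN1.
  by move: (hsign (fun i => 0 < c i)); rewrite /= E hs0 eqxx.
have [k2|k3] : k = 2%N \/ k = 3%N by lia.
- subst k; left; exact: (@iso_phi R n d 2 U B C hB hC hBC hQ hdk hCU hBU).
- subst k; right; exact: (@iso_phi R n d 3 U B C hB hC hBC hQ hdk hCU hBU).
Qed.
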